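(* Let $b\ge3$, $2\le j\le b-1$, let $q\in[0,\infty)^b$ with $q_1\le q_2\le\dots\le q_{j-1}$, and let $0\le\alpha<1$. Let $p=(p_1,\dots,p_{j-1},0,\dots,0)$ be a probability vector in $\mathbb R^b$ (i.e. $p_i=0$ for $i\ge j$) with $p_i\le1-\alpha$ for all $i$. Then $$\Psi_j(p_1,\dots,p_{j-1},0,\dots,0;\,q_1,\dots,q_b)\le\Psi_j(1-\alpha,\alpha,0,\dots,0;\,q_1,\dots,q_b).$$
   Context: For an integer $1\le j\le b-1$ and vectors $p,q\in\mathbb R^b$, $$\Psi_j(p;q)=\frac{1}{(b-j-1)!}\sum_{\sigma\in S_b}\Big(p_{\sigma(1)}\cdots p_{\sigma(j)}\,q_{\sigma(j+1)}+q_{\sigma(1)}\cdots q_{\sigma(j)}\,p_{\sigma(j+1)}\Big),$$ where $S_b$ is the set of permutations of $\{1,\dots,b\}$; the first $b$ arguments form $p$ and the last $b$ form $q$. *)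

(* Defs.v *)
From mathcomp Require Import all_boot all_order all_algebra all_fingroup.
Set Implicit Arguments. Unset Strict Implicit. Unset Printing Implicit Defensive.
Import Order.TTheory GRing.Theory Num.Theory.
Local Open Scope ring_scope.

(* Vectors in R^b are functions 'I_b -> R, with 0-based indices: the paper's
   coordinate x_k is x (k-1).
   The factor x_{s(j+1)} is written as the single-term sum over the unique
   k : 'I_b with val k = j (0-based index of the paper's position j+1). *)
Definition Psi (R : fieldType) (b j : nat) (p q : 'I_b -> R) : R :=
  (((b - j - 1)`!)%:R)^-1 *
  \sum_(s : 'S_b)
     ((\prod_(i < b | (i < j)%N) p (s i)) * (\sum_(k < b | val k == j) q (s k))
    + (\prod_(i < b | (i < j)%N) q (s i)) * (\sum_(k < b | val k == j) p (s k))).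

(* Main.v *)
Require Import Defs.
From mathcomp Require Import all_boot all_order all_algebra all_fingroup.
From mathcomp Require Import zify ring lra.
Set Implicit Arguments. Unset Strict Implicit.
Import Order.TTheory GRing.Theory Num.Theory.
Local Open Scope ring_scope.

Definition Qf (R : realFieldType) (b j : nat) (q : 'I_b -> R) (s : 'S_b) : R :=
  \prod_(i < b | (i < j)%N) q (s i).

Definition Ff (R : realFieldType) (b j : nat) (jj : 'I_b) (q : 'I_b -> R) (k : 'I_b) : R :=
  \sum_(s : 'S_b | s jj == k) Qf j q s.

Lemma A_zero (R : realFieldType) (b j : nat) (p : 'I_b -> R) (s : 'S_b) :
  (0 < b)%N -> (j <= b)%N -> (1 <= j)%N ->
  (forall i : 'I_b, (j - 1 <= i)%N -> p i = 0) ->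
  \prod_(i < b | (i < j)%N) p (s i) = 0.
Proof.
move=> b0 jb j1 hp0.
case: (boolP [exists i : 'I_b, (i < j)%N && (j - 1 <= s i)%N]).
  move/existsP => [i /andP [ij hi]].
  by rewrite (bigD1 i) //= hp0 // mul0r.
rewrite negb_exists => /forallP H; exfalso.
pose k0 : 'I_b := Ordinal b0.
pose g i := val (s (insubd k0 i)).
have : (size [seq g i | i <- iota 0 j] <= size (iota 0 (j-1)))%N.
  apply: uniq_leq_size.
  - rewrite map_inj_in_uniq ?iota_uniq //.
    move=> x y; rewrite !mem_iota => /andP[_ hx] /andP[_ hy].
    rewrite /g => /val_inj /perm_inj /(congr1 val).
    by rewrite !val_insubd /= (leq_trans hx jb) (leq_trans hy jb).
  - move=> x /mapP [i]; rewrite mem_iota => /andP[_ hi] ->.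
    rewrite mem_iota /= add0n.
    have := H (insubd k0 i).
    rewrite val_insubd /= (leq_trans hi jb) hi /= -ltnNge.
    by rewrite /g.
rewrite !size_map !size_iota; lia.
Qed.

Lemma F_mono (R : realFieldType) (b j : nat) (jj : 'I_b) (q : 'I_b -> R) (k k' : 'I_b) :
  val jj = j -> (forall i, 0 <= q i) -> q k' <= q k -> Ff j jj q k <= Ff j jj q k'.
Proof.
move=> hjj q0 hkk.
rewrite /Ff [X in _ <= X](reindex_inj (mulIg (tperm k k'))) /=.
under [X in _ <= X]eq_bigl => s do rewrite permM (canF_eq (tpermK k k')) tpermR.
apply: ler_sum => s /eqP sjj.
rewrite /Qf; apply: ler_prod => i ij; rewrite q0 /= permM.
case: tpermP => [hk|hk'|_ _] //.
  exfalso; move: hk; rewrite -sjj => /perm_inj ie.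
  by move: ij; rewrite ie hjj ltnn.
by rewrite hk'.
Qed.

Lemma B_split (R : realFieldType) (b j : nat) (jj : 'I_b) (q x : 'I_b -> R) :
  \sum_(s : 'S_b) Qf j q s * x (s jj) = \sum_(k < b) x k * Ff j jj q k.
Proof.
rewrite (partition_big (fun s : 'S_b => s jj) predT) //.
apply: eq_bigr => k _; rewrite /Ff mulr_sumr.
apply: eq_big => s //= /eqP ->; by rewrite mulrC.
Qed.

Theorem mainTheorem8 (R : realFieldType) (b j : nat) (p q : 'I_b -> R) (alpha : R) :
  (3 <= b)%N -> (2 <= j)%N -> (j <= b - 1)%N ->
  (forall i, 0 <= q i) ->
  (forall i i' : 'I_b, (i <= i')%N -> (i' < j - 1)%N -> q i <= q i') ->
  0 <= alpha -> alpha < 1 ->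
  (forall i, 0 <= p i) -> \sum_(i < b) p i = 1 ->
  (forall i : 'I_b, (j - 1 <= i)%N -> p i = 0) ->
  (forall i, p i <= 1 - alpha) ->
  Psi j p q <=
  Psi j (fun i : 'I_b => if val i == 0%N then 1 - alpha
                         else if val i == 1%N then alpha else 0) q.
Proof.
move=> b3 j2 jb q0 qmon a0 a1 p0 psum hp0 p1a.
set p' := (fun i : 'I_b => _).
have jlt : (j < b)%N by lia.
pose jj : 'I_b := Ordinal jlt.
have p'0 : forall i, 0 <= p' i.
  move=> i; rewrite /p'; case: ifP => _; first lra.
  by case: ifP => _; lra.
rewrite /Psi; apply: ler_wpM2l; first by rewrite invr_ge0 ler0n.
rewrite !big_split /=; apply: lerD.
  rewrite big1; last by move=> s _; rewrite (@A_zero R b j) ?mul0r //; lia.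
  apply: sumr_ge0 => s _; apply: mulr_ge0.
    by apply: prodr_ge0 => i _.
  by apply: sumr_ge0 => i _.
have red : forall x : 'I_b -> R, \sum_(s : 'S_b)
    (\prod_(i < b | (i < j)%N) q (s i)) * (\sum_(k < b | val k == j) x (s k))
    = \sum_(k < b) x k * Ff j jj q k.
  move=> x; rewrite -B_split; apply: eq_bigr => s _.
  rewrite [X in _ * X](big_pred1 jj) // => k; by rewrite /= -val_eqE.
rewrite !red.
have b0 : (0 < b)%N by lia.
have b1 : (1 < b)%N by lia.
pose i0 : 'I_b := Ordinal b0.
pose i1 : 'I_b := Ordinal b1.
have Fm := @F_mono R b j jj q.
have hjj : val jj = j by [].
have -> : \sum_(k < b) p' k * Ff j jj q k = (1 - alpha) * Ff j jj q i0 + alpha * Ff j jj q i1.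
  rewrite (bigD1 i0) //= (bigD1 i1) //= big1 ?addr0.
    by rewrite /p' /=.
  move=> k /andP [h0 h1]; rewrite /p'.
  move: h0 h1; rewrite -!val_eqE /= => /negbTE -> /negbTE ->; by rewrite mul0r.
rewrite (bigD1 i0) //=.
have sum1 : \sum_(k < b | k != i0) p k = 1 - p i0.
  rewrite -psum [X in _ = X - _](bigD1 i0) //=; lra.
have le1 : \sum_(k < b | k != i0) p k * Ff j jj q k <= (1 - p i0) * Ff j jj q i1.
  rewrite -sum1 mulr_suml; apply: ler_sum => k kn0.
  case: (leqP (j - 1) k) => hk; first by rewrite hp0 // !mul0r.
  apply: ler_wpM2l => //.
  case: (eqVneq k i1) => [->//|kn1].
  apply: Fm => //; apply: qmon => //.
  move: kn0 kn1; rewrite -!val_eqE /=; lia.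
have pi0 : p i0 <= 1 - alpha := p1a i0.
case: (eqVneq j 2) => [e2|jn2].
  have z : \sum_(k < b | k != i0) p k = 0.
    apply: big1 => k; rewrite -val_eqE /= => kn; apply: hp0; lia.
  have e1 : p i0 = 1 by move: sum1; rewrite z; lra.
  have ea : alpha = 0 by lra.
  rewrite e1 ea; move: le1; rewrite e1; lra.
have F10 : Ff j jj q i1 <= Ff j jj q i0.
  apply: Fm => //; apply: qmon => //=; lia.
have : (1 - alpha - p i0) * (Ff j jj q i0 - Ff j jj q i1) >= 0.
  apply: mulr_ge0; lra.
nra.
Qed.
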